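(* For all integers $k\ge 2$ and $n\ge 1$, $$\mathrm{spt}k_d(n)+\mathrm{spt}(k-1)_d(n)=\mathrm{spt}(k-1)_d(n-k+1)+p_d(n-k+1).$$
   Context: For a partition $\pi$, $s(\pi)$ denotes its smallest part. For $j\ge1$, $\mathrm{Spt}j_d(n)$ is the set of partitions $\pi$ of $n$ in which the smallest part $s(\pi)$ occurs exactly $j$ times and all remaining parts (those larger than $s(\pi)$) are pairwise distinct; $\mathrm{spt}j_d(n)=|\mathrm{Spt}j_d(n)|$, with $\mathrm{spt}j_d(n)=0$ for $n\le 0$. $p_d(n)$ is the number of partitions of $n$ into distinct parts, with $p_d(0)=1$ and $p_d(n)=0$ for $n<0$. *)

(* Defs.v *)
From mathcomp Require Import all_boot ssralg ssrint.
Set Implicit Arguments. Unset Strict Implicit. Unset Printing Implicit Defensive.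

(* A partition of n (n : nat) is encoded by its multiplicity function
   f : 'I_n -> 'I_n.+1, where f i is the number of times the part (i+1)
   occurs; the encoding is a bijection onto the partitions of n when we
   require  \sum_i (i+1) * f i = n  (every part is <= n and every
   multiplicity is <= n). *)
Definition mult_fun (n : nat) := {ffun 'I_n -> 'I_n.+1}.

Definition is_partition (n : nat) (f : mult_fun n) : bool :=
  \sum_(i < n) (i.+1 * f i) == n.

(* pi is in Spt j_d(n): with smallest part s = i+1 (the smallest index with
   positive multiplicity), s occurs exactly j times and every larger part
   occurs at most once. *)
Definition in_sptd (j n : nat) (f : mult_fun n) : bool :=
  is_partition f &&
  [exists i : 'I_n,
     [&& (f i == j :> nat),
         [forall i' : 'I_n, (i' < i) ==> (f i' == 0 :> nat)] &
         [forall i' : 'I_n, (i < i') ==> (f i' <= 1)]]].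

Definition is_distinct (n : nat) (f : mult_fun n) : bool :=
  is_partition f && [forall i : 'I_n, f i <= 1].

Definition sptd_nat (j n : nat) : nat := #|[set f : mult_fun n | in_sptd j f]|.
(* p_d(n) on natural numbers n (p_d(0) = 1: the empty partition). *)
Definition pd_nat (n : nat) : nat := #|[set f : mult_fun n | is_distinct f]|.

Definition sptd (j : nat) (n : int) : nat :=
  match n with Posz m => sptd_nat j m | Negz _ => 0 end.
Definition pd (n : int) : nat :=
  match n with Posz m => pd_nat m | Negz _ => 0 end.

(* Main.v *)
Require Import Defs.
From mathcomp Require Import all_boot all_algebra zify.
From Stdlib Require Import FunctionalExtensionality.
Set Implicit Arguments. Unset Strict Implicit.

Definition to_g N (f : mult_fun N) (i : nat) : nat :=
  oapp (fun o : 'I_N => nat_of_ord (f o)) 0 (insub i).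
Definition of_g N (g : nat -> nat) : mult_fun N := [ffun o : 'I_N => inord (g (nat_of_ord o))].

Lemma to_g_val N (f : mult_fun N) (o : 'I_N) : to_g f o = f o.
Proof. by rewrite /to_g valK. Qed.

Lemma to_g_lt N (f : mult_fun N) i (hi : i < N) : to_g f i = f (Ordinal hi).
Proof. exact: (to_g_val f (Ordinal hi)). Qed.

Lemma to_g_out N (f : mult_fun N) i : N <= i -> to_g f i = 0.
Proof. by move=> h; rewrite /to_g insubF // ltnNge h. Qed.

Definition Part N (g : nat -> nat) :=
  (forall i, N <= i -> g i = 0) /\ \sum_(i < N) i.+1 * g i = N.
Definition SptP N j g := Part N g /\ exists s, [/\ g s = j,
  (forall i, i < s -> g i = 0) & (forall i, s < i -> g i <= 1)].
Definition DistP N g := Part N g /\ forall i, g i <= 1.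

Lemma term_le B (F : nat -> nat) i : i < B -> F i <= \sum_(j < B) F j.
Proof. move=> hi. rewrite (bigD1 (Ordinal hi)) //=. exact: leq_addr. Qed.

Lemma sum_bound B N (g : nat -> nat) : N <= B -> (forall i, N <= i -> g i = 0) ->
  \sum_(i < B) i.+1 * g i = \sum_(i < N) i.+1 * g i.
Proof.
move=> hNB hz; elim: B hNB => [|B IH]; first by rewrite leqn0 => /eqP ->.
rewrite leq_eqVlt => /orP [/eqP <- //| hlt].
by rewrite big_ord_recr /= IH // hz // muln0 addn0.
Qed.

Lemma part_lt N g i : Part N g -> 0 < g i -> i < N.
Proof. case=> hz _ hg; rewrite ltnNge; apply/negP=> h. by rewrite hz in hg. Qed.

Lemma part_le N g i : Part N g -> g i <= N.
Proof.
move=> [hz hs]; case: (ltnP i N) => hi; last by rewrite hz.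
have := term_le (fun j => j.+1 * g j) hi; rewrite hs => h.
apply: leq_trans h; exact: leq_pmull.
Qed.

Lemma partB B N g : (forall i, B <= i -> g i = 0) -> N <= B ->
  \sum_(i < B) i.+1 * g i = N -> Part N g.
Proof.
move=> hz hNB hs.
have hz' : forall i, N <= i -> g i = 0.
  move=> i hi; case: (ltnP i B) => hiB; last exact: hz.
  have := term_le (fun j => j.+1 * g j) hiB; rewrite hs => h.
  case: (posnP (g i)) => // gp. have : i.+1 <= i.+1 * g i by rewrite leq_pmulr.
  lia.
split=> //; by rewrite -(sum_bound hNB hz').
Qed.

Lemma partW B N g : Part N g -> N <= B -> \sum_(i < B) i.+1 * g i = N.
Proof. by move=> [hz hs] hNB; rewrite (sum_bound hNB hz). Qed.

Lemma to_of N g : Part N g -> to_g (of_g N g) = g.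
Proof.
move=> hp; apply: functional_extensionality => i.
case: (ltnP i N) => hi.
  have -> : i = nat_of_ord (Ordinal hi) by [].
  rewrite to_g_val ffunE inordK //=; have := part_le i hp; lia.
by rewrite to_g_out // hp.1.
Qed.

Lemma of_to N (f : mult_fun N) : of_g N (to_g f) = f.
Proof. apply/ffunP=> o; rewrite ffunE to_g_val; apply: val_inj; exact: inordK. Qed.

Lemma is_part_to N (f : mult_fun N) : is_partition f = true <-> Part N (to_g f).
Proof.
rewrite /is_partition; split.
  move/eqP=> h; split; first exact: to_g_out.
  by rewrite -[in RHS]h; apply: eq_bigr => o _; rewrite to_g_val.
by case=> _ h; apply/eqP; rewrite -[in RHS]h; apply: eq_bigr => o _; rewrite to_g_val.
Qed.

Lemma sptd_to N j (f : mult_fun N) : 0 < j -> in_sptd j f = true <-> SptP N j (to_g f).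
Proof.
move=> j0; rewrite /in_sptd; split.
  case/andP=> /is_part_to hp /existsP [i /and3P [/eqP h1 /forallP h2 /forallP h3]].
  split=> //; exists i; split; first by rewrite to_g_val.
    move=> i' hi'; have hi'N : i' < N by apply: ltn_trans (ltn_ord i).
    have := h2 (Ordinal hi'N); rewrite hi' /= => /eqP.
    by rewrite (to_g_lt f hi'N).
  move=> i' hi'; case: (ltnP i' N) => hN; last by rewrite to_g_out.
  have := h3 (Ordinal hN); rewrite hi' /=.
  by rewrite (to_g_lt f hN).
case=> hp [s [h1 h2 h3]]; apply/andP; split; first exact/is_part_to.
have hs : s < N by apply: (part_lt hp); rewrite h1.
apply/existsP; exists (Ordinal hs); apply/and3P; split.
- by rewrite -to_g_val h1.
- apply/forallP=> o; apply/implyP=> ho; by rewrite -to_g_val h2.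
- apply/forallP=> o; apply/implyP=> ho; by rewrite -to_g_val h3.
Qed.

Lemma dist_to N (f : mult_fun N) : is_distinct f = true <-> DistP N (to_g f).
Proof.
rewrite /is_distinct; split.
  case/andP=> /is_part_to hp /forallP h; split=> // i.
  case: (ltnP i N) => hN; last by rewrite to_g_out.
  by rewrite (to_g_lt f hN).
case=> hp h; apply/andP; split; first exact/is_part_to.
by apply/forallP=> o; rewrite -to_g_val.
Qed.

Definition upd (g : nat -> nat) s v i := if i == s then v else g i.

Fixpoint lowest (g : nat -> nat) (B : nat) : nat :=
  match B with 0 => 0 | B'.+1 => if g 0 != 0 then 0 else (lowest (fun i => g i.+1) B').+1 end.

Lemma lowest_eq B g s : s < B -> g s != 0 -> (forall i, i < s -> g i = 0) -> lowest g B = s.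
Proof.
elim: B g s => [//|B IH] g [|s] /= hs hg hz; first by rewrite hg.
rewrite hz // eqxx /=; congr _.+1; apply: IH => // i hi; exact: hz.
Qed.

Lemma sum_upd B g s v : s < B ->
  \sum_(i < B) i.+1 * upd g s v i + s.+1 * g s = \sum_(i < B) i.+1 * g i + s.+1 * v.
Proof.
move=> hs; rewrite (bigD1 (Ordinal hs)) //= [in RHS](bigD1 (Ordinal hs)) //=.
rewrite /upd eqxx.
have -> : \sum_(i < B | i != Ordinal hs) i.+1 * (if nat_of_ord i == s then v else g i)
  = \sum_(i < B | i != Ordinal hs) i.+1 * g i.
  by apply: eq_bigr => i hi; rewrite ifN.
move: (\sum_(i < B | i != Ordinal hs) i.+1 * g i) => S; lia.
Qed.

Definition phiS n c g := let s := lowest g n in upd (upd g s 0) s.+1 (g s.+1 + c).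
Definition phiD c (g : nat -> nat) := upd g 0 (g 0 + c).
Definition psi n c h := let s := lowest h n in
  if s == 0 then upd h 0 (h 0 - c) else upd (upd h s (h s - c)) s.-1 c.

Ltac updt := rewrite /upd; repeat (case: eqP => ?; subst => //=); try lia.

Section Bij.
Variables (m c : nat).
Hypothesis c0 : 0 < c.
Local Notation n := (m + c).

Lemma F1 g s : Part m g -> g s = c -> (forall i, i < s -> g i = 0) ->
  (forall i, s < i -> g i <= 1) ->
  [/\ lowest (phiS n c g) n = s.+1, phiS n c g s.+1 = g s.+1 + c,
      SptP n (g s.+1 + c) (phiS n c g) & psi n c (phiS n c g) = g].
Proof.
move=> hp h1 h2 h3.
have hsm : s < m by apply: (part_lt hp); rewrite h1.
have hl : lowest g n = s by apply: lowest_eq => //; [lia | rewrite h1; lia].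
have hv : phiS n c g s.+1 = g s.+1 + c by rewrite /phiS hl; updt.
have hl2 : lowest (phiS n c g) n = s.+1.
  apply: lowest_eq; [lia | rewrite hv; lia | ].
  move=> i hi; rewrite /phiS hl; updt; apply: h2; lia.
split=> //.
- split; last first.
    exists s.+1; split=> //.
      move=> i hi; rewrite /phiS hl; updt; apply: h2; lia.
    move=> i hi; rewrite /phiS hl; updt; apply: h3; lia.
  split.
    move=> i hi; rewrite /phiS hl; updt; apply: hp.1; lia.
  have e1 := sum_upd (upd g s 0) (g s.+1 + c) (_ : s.+1 < n).
  have e2 := sum_upd g 0 (_ : s < n).
  have e3 := partW hp (_ : m <= n).
  rewrite /phiS hl.
  have hs1 : upd g s 0 s.+1 = g s.+1 by updt.
  rewrite hs1 in e1; rewrite h1 in e2.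
  have := e1 ltac:(lia); have := e2 ltac:(lia); have := e3 ltac:(lia). nia.
- rewrite /psi hl2 /=; apply: functional_extensionality => i.
  rewrite hv; rewrite /phiS hl; updt.
Qed.

Lemma F2 g : DistP m g ->
  [/\ lowest (phiD c g) n = 0, phiD c g 0 = g 0 + c,
      SptP n (g 0 + c) (phiD c g) & psi n c (phiD c g) = g].
Proof.
move=> [hp h1].
have hv : phiD c g 0 = g 0 + c by rewrite /phiD; updt.
have hl2 : lowest (phiD c g) n = 0.
  apply: lowest_eq => //; [lia | rewrite hv; lia].
split=> //.
- split; last first.
    exists 0; split=> // i hi; rewrite /phiD; updt.
  split.
    move=> i hi; rewrite /phiD; updt; apply: hp.1; lia.
  have e2 := sum_upd g (g 0 + c) (_ : 0 < n).
  have e3 := partW hp (_ : m <= n).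
  rewrite /phiD. have := e2 ltac:(lia); have := e3 ltac:(lia). nia.
- rewrite /psi hl2 /=; apply: functional_extensionality => i.
  rewrite hv; rewrite /phiD; updt.
Qed.

Lemma F3 h j s : SptP n j h -> (j = c \/ j = c.+1) -> h s = j ->
  (forall i, i < s -> h i = 0) -> (forall i, s < i -> h i <= 1) ->
  lowest h n = s /\
  if s == 0 then DistP m (psi n c h) /\ phiD c (psi n c h) = h
  else [/\ SptP m c (psi n c h), lowest (psi n c h) n = s.-1 &
           phiS n c (psi n c h) = h].
Proof.
move=> [hp _] hj h1 h2 h3.
have hsn : s < n by apply: (part_lt hp); rewrite h1; lia.
have hl : lowest h n = s by apply: lowest_eq => //; rewrite h1; lia.
split=> //.
have e3 := partW hp (leqnn n).
case: (eqVneq s 0) => [hs0 | s0] /=.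
  rewrite /psi hl hs0 /=; rewrite hs0 in h1 h3.
  split.
    have hz : forall i, n <= i -> upd h 0 (h 0 - c) i = 0.
      by move=> i hi; updt; apply: hp.1.
    split; last by move=> i; updt; apply: h3; lia.
    apply: (partB hz (_ : m <= n)); first lia.
    have e2 := sum_upd h (h 0 - c) (_ : 0 < n).
    have := e2 ltac:(lia). nia.
  apply: functional_extensionality => i; rewrite /phiD; updt.
rewrite /psi hl ifN //.
set h' := upd (upd h s (h s - c)) s.-1 c.
have hv : h' s.-1 = c by rewrite /h'; updt.
have hl2 : lowest h' n = s.-1.
  apply: lowest_eq; [lia | rewrite hv; lia |].
  move=> i hi; rewrite /h'; updt; apply: h2; lia.
split=> //.
- split; last first.
    exists s.-1; split=> //.
      move=> i hi; rewrite /h'; updt; apply: h2; lia.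
    move=> i hi; rewrite /h'; updt; apply: h3; lia.
  have hz : forall i, n <= i -> h' i = 0.
    by move=> i hi; rewrite /h'; updt; apply: hp.1.
  apply: (partB hz (_ : m <= n)); first lia.
  have e1 := sum_upd (upd h s (h s - c)) c (_ : s.-1 < n).
  have e2 := sum_upd h (h s - c) (_ : s < n).
  have hs1 : upd h s (h s - c) s.-1 = h s.-1 by updt.
  have hs2 : h s.-1 = 0 by apply: h2; lia.
  rewrite hs1 hs2 in e1.
  rewrite /h'. have := e1 ltac:(lia); have := e2 ltac:(lia).
  have -> : s.-1.+1 = s by lia.
  nia.
- rewrite /phiS hl2; apply: functional_extensionality => i.
  have -> : s.-1.+1 = s by lia.
  rewrite /h'; updt; symmetry; apply: h2; lia.
Qed.
End Bij.

Lemma card_sum2 (T : finType) (A B : {set T}) :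
  #|[set inl x | x in A] :|: [set (@inr T T) x | x in B]| = #|A| + #|B|.
Proof.
rewrite cardsU !card_imset; [|exact: inr_inj|exact: inl_inj].
suff -> : [set inl x | x in A] :&: [set (@inr T T) x | x in B] = set0 by rewrite cards0 subn0.
apply/setP=> z; rewrite inE in_set0; apply/negP=> /andP [/imsetP [a _ ->] /imsetP [b _]] //.
Qed.

Section Main.
Variables (m c : nat).
Hypothesis c0 : 0 < c.
Local Notation n := (m + c).

Definition tag1 h : mult_fun n + mult_fun n :=
  if h (lowest h n) == c.+1 then inl (of_g n h) else inr (of_g n h).
Definition Phi (x : mult_fun m + mult_fun m) :=
  match x with inl f => tag1 (phiS n c (to_g f)) | inr f => tag1 (phiD c (to_g f)) end.
Definition psi_tag h : mult_fun m + mult_fun m :=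
  if lowest h n == 0 then inr (of_g m (psi n c h)) else inl (of_g m (psi n c h)).
Definition Psi (y : mult_fun n + mult_fun n) :=
  match y with inl f => psi_tag (to_g f) | inr f => psi_tag (to_g f) end.

Definition S2 := [set inl x | x in [set f : mult_fun m | in_sptd c f]] :|:
                 [set inr x | x in [set f : mult_fun m | is_distinct f]].
Definition S1 := [set inl x | x in [set f : mult_fun n | in_sptd c.+1 f]] :|:
                 [set inr x | x in [set f : mult_fun n | in_sptd c f]].

Lemma inS1 h : (h (lowest h n) = c \/ h (lowest h n) = c.+1) -> SptP n (h (lowest h n)) h ->
  tag1 h \in S1 /\ Psi (tag1 h) = psi_tag h.
Proof.
move=> hj hs; have hp := hs.1; have e := to_of hp.
rewrite /tag1; case: eqP => hv.
  split; last by rewrite /= e.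
  apply/setUP; left; apply/imsetP; exists (of_g n h) => //.
  by rewrite inE; apply/sptd_to => //; rewrite e; move: hs; rewrite hv.
split; last by rewrite /= e.
apply/setUP; right; apply/imsetP; exists (of_g n h) => //.
rewrite inE; apply/sptd_to => //; rewrite e.
by case: hj => hj; [move: hs; rewrite hj | rewrite hj in hv].
Qed.

Lemma PhiS2 x : x \in S2 -> Phi x \in S1 /\ Psi (Phi x) = x.
Proof.
rewrite /S2 /S1 => /setUP [] /imsetP [f]; rewrite inE => hf ->.
  have [hp [s [h1 h2 h3]]] := (sptd_to f c0).1 hf.
  have [hl hv hs hps] := F1 c0 hp h1 h2 h3.
  have hle := h3 s.+1 (ltnSn s).
  have [] := @inS1 (phiS n c (to_g f)); rewrite ?hl ?hv //; first lia.
  move=> -> -> /=; split=> //; rewrite /psi_tag hl /= hps; by rewrite of_to.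
have [hp hd] := (dist_to f).1 hf.
have [hl hv hs hps] := F2 c0 (conj hp hd).
have hle := hd 0.
have [] := @inS1 (phiD c (to_g f)); rewrite ?hl ?hv //; first lia.
move=> -> -> /=; split=> //; rewrite /psi_tag hl /= hps; by rewrite of_to.
Qed.

Lemma PsiS1 y : y \in S1 -> Psi y \in S2 /\ Phi (Psi y) = y.
Proof.
have key : forall (f : mult_fun n) j, (j = c \/ j = c.+1) -> in_sptd j f ->
   Psi (inl f) = Psi (inr f) /\ Psi (inl f) \in S2 /\ Phi (Psi (inl f)) = tag1 (to_g f).
  move=> f j hj hf; split=> //.
  have j0 : 0 < j by case: hj => ->.
  have [hs [s [h1 h2 h3]]] := (sptd_to f j0).1 hf.
  have [hl] := F3 c0 (conj hs (ex_intro _ s (And3 h1 h2 h3))) hj h1 h2 h3.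
  rewrite /= /psi_tag hl; case: eqP => [s0 [hd hph] | s0 [hsp hl2 hph]].
    split; first by apply/setUP; right; apply/imsetP; exists (of_g m (psi n c (to_g f))) => //;
      rewrite inE; apply/dist_to; rewrite to_of //; case: hd.
    by rewrite /= to_of ?hph //; case: hd.
  split; first by apply/setUP; left; apply/imsetP; exists (of_g m (psi n c (to_g f))) => //;
      rewrite inE; apply/sptd_to => //; rewrite to_of //; case: hsp.
  by rewrite /= to_of ?hph //; case: hsp.
have tagE : forall (f : mult_fun n) j, (j = c \/ j = c.+1) -> in_sptd j f ->
   tag1 (to_g f) = if j == c.+1 then inl f else inr f.
  move=> f j hj hf.
  have j0 : 0 < j by case: hj => ->.
  have [hs [s [h1 h2 h3]]] := (sptd_to f j0).1 hf.
  have [hl _] := F3 c0 (conj hs (ex_intro _ s (And3 h1 h2 h3))) hj h1 h2 h3.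
  by rewrite /tag1 hl h1 of_to.
rewrite /S2 /S1 => /setUP [] /imsetP [f]; rewrite inE => hf ->.
  have hj : c.+1 = c \/ c.+1 = c.+1 by right.
  have [_ [h1 h2]] := key f _ hj hf; split=> //; by rewrite h2 (tagE f _ hj hf) eqxx.
have hj : c = c \/ c = c.+1 by left.
have [e [h1 h2]] := key f _ hj hf; rewrite -e; split=> //.
by rewrite h2 (tagE f _ hj hf) ifN // neq_ltn ltnSn.
Qed.

Lemma cardS : #|S1| = #|S2|.
Proof.
have inj : {in S2 &, injective Phi}.
  move=> x y hx hy e; by rewrite -(PhiS2 hx).2 -(PhiS2 hy).2 e.
rewrite -(card_in_imset inj); apply: eq_card => y.
apply/idP/imsetP.
  move=> hy; exists (Psi y); [exact: (PsiS1 hy).1 | by rewrite (PsiS1 hy).2].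
by case=> x hx ->; exact: (PhiS2 hx).1.
Qed.

Lemma main_nat : sptd_nat c.+1 n + sptd_nat c n = sptd_nat c m + pd_nat m.
Proof. by have := cardS; rewrite /S1 /S2 !card_sum2. Qed.
End Main.
Unset Implicit Arguments.

Lemma sptd_zero j N : N < j -> sptd_nat j N = 0.
Proof.
move=> hj; apply/eqP; rewrite cards_eq0; apply/eqP/setP => f; rewrite !inE.
apply/negP => /andP [_ /existsP [i /and3P [/eqP h _ _]]]; have := ltn_ord (f i); rewrite h; lia.
Qed.

Theorem theorem1p1 (k n : nat) (hk : 2 <= k) (hn : 1 <= n) :
  (sptd k n + sptd k.-1 n =
   sptd k.-1 (n%:Z - k%:Z + 1) + pd (n%:Z - k%:Z + 1))%N.
Proof.
case: (leqP k n.+1) => hkn.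
  have -> : (n%:Z - k%:Z + 1 = (n.+1 - k)%N%:Z)%R by lia.
  rewrite /sptd /pd.
  have hn' : n = ((n.+1 - k) + k.-1)%N by lia.
  have hk' : k = (k.-1).+1 by lia.
  rewrite [in LHS]hn' [X in sptd_nat X _]hk'.
  apply: main_nat; lia.
case e: (n%:Z - k%:Z + 1)%R => [p|p]; first lia.
rewrite /= !sptd_zero //; lia.
Qed.
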